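(* For $i\in\{1,2\}$, let $G_i$ be a graph with maximum degree $\Delta_i$ and degeneracy $d_i$ that contains $K_{s_i,t_i}$ as a subgraph, where $1\leq s_i\leq t_i$. Then $$\max\{d_1d_2,\ \min\{s_1t_2,s_2t_1\},\ \min\{\Delta_1,\Delta_2\}\}\ \leq\ \operatorname{degen}(G_1\times G_2)\ \leq\ \min\{d_1\Delta_2,\ d_2\Delta_1\}.$$
   Context: The degeneracy $\operatorname{degen}(G)$ of a graph $G$ is the minimum integer $d$ such that every subgraph of $G$ has minimum degree at most $d$. The direct product $G_1 \times G_2$ has vertex set $V(G_1)\times V(G_2)$, with $(a,v)(b,u)$ an edge iff $ab\in E(G_1)$ and $uv\in E(G_2)$. *)

(* Defs.v *)
(* Finite simple graphs: T : finType with a symmetric,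
   irreflexive adjacency relation e : rel T. *)
From mathcomp Require Import all_boot.
Set Implicit Arguments. Unset Strict Implicit. Unset Printing Implicit Defensive.

Section Graphs.
Variable T : finType.
Implicit Types (e : rel T).

Definition deg e (v : T) : nat := #|[set u | e v u]|.

Definition maxdeg e : nat := \max_(v : T) deg e v.

(* (S, F) is a subgraph of (T, e): S a vertex subset, F a symmetric set of
   ordered pairs (each edge {x,y} recorded as (x,y) and (y,x)), all edges of
   e with both ends in S. *)
Definition subgraphb e (S : {set T}) (F : {set T * T}) : bool :=
  [forall x, forall y, ((x, y) \in F) ==>
     [&& e x y, x \in S, y \in S & (y, x) \in F]].

Definition subdeg (F : {set T * T}) (v : T) : nat := #|[set u | (v, u) \in F]|.

Definition degen_bound e (d : nat) : bool :=
  [forall S : {set T}, forall F : {set T * T},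
     ((S != set0) && subgraphb e S F) ==> [exists v in S, subdeg F v <= d]].

Lemma degen_bound_exists e : exists d, degen_bound e d.
Proof.
exists #|T|; apply/forallP => S; apply/forallP => F; apply/implyP.
case/andP => /set0Pn [v vS] _; apply/existsP; exists v.
by rewrite vS /subdeg max_card.
Qed.

Definition degen e : nat := ex_minn (degen_bound_exists e).

Definition contains_Kst e (s t : nat) : Prop :=
  exists A B : {set T}, [/\ [disjoint A & B], #|A| = s, #|B| = t &
    forall a b, a \in A -> b \in B -> e a b].

End Graphs.

Definition dprod_rel (T1 T2 : finType) (e1 : rel T1) (e2 : rel T2) : rel (T1 * T2) :=
  fun x y => e1 x.1 y.1 && e2 x.2 y.2.

(* Main.v *)
Require Import Defs.
From mathcomp Require Import all_boot.
From mathcomp Require Import zify.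
Set Implicit Arguments. Unset Strict Implicit. Unset Printing Implicit Defensive.

Section Aux.
Variable T : finType.
Implicit Types (e : rel T).

Lemma degen_min e d : degen_bound e d -> degen e <= d.
Proof. move=> h; rewrite /degen; case: ex_minnP => m _ mm; exact: mm. Qed.

Lemma degen_ok e : degen_bound e (degen e).
Proof. by rewrite /degen; case: ex_minnP. Qed.

Lemma degen_lb e (S : {set T}) (F : {set T * T}) k :
  S != set0 -> subgraphb e S F -> (forall v, v \in S -> k <= subdeg F v) ->
  k <= degen e.
Proof.
move=> Sn sF hk; have := degen_ok e.
move/forallP/(_ S)/forallP/(_ F)/implyP; rewrite Sn sF => /(_ isT).
case/exists_inP => v vS le; exact: leq_trans (hk v vS) le.
Qed.

Lemma degen_core e : 0 < degen e -> exists S : {set T}, exists F : {set T * T},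
  [/\ S != set0, subgraphb e S F & forall v, v \in S -> degen e <= subdeg F v].
Proof.
move=> pos.
have : ~~ degen_bound e (degen e).-1.
  by apply/negP => /degen_min; rewrite leqNgt ltn_predL pos.
rewrite negb_forall => /existsP [S]; rewrite negb_forall => /existsP [F].
rewrite negb_imply => /andP[/andP[Sn sF]].
rewrite negb_exists_in => /forall_inP h.
exists S, F; split => // v vS; have := h v vS; rewrite -ltnNge; lia.
Qed.

Definition ind e (S : {set T}) : {set T * T} :=
  [set p | [&& e p.1 p.2, p.1 \in S & p.2 \in S]].

Lemma ind_sub e S : symmetric e -> subgraphb e S (ind e S).
Proof.
move=> sy; apply/forallP=> x; apply/forallP=> y; apply/implyP.
rewrite !inE /= => /and3P[exy xS yS].
by rewrite exy xS yS /= sy exy.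
Qed.

Lemma degen_Kbip e (A B : {set T}) : symmetric e -> [disjoint A & B] ->
  (forall a b, a \in A -> b \in B -> e a b) -> minn #|A| #|B| <= degen e.
Proof.
move=> sy dAB hAB.
have [A0|Ap] := posnP #|A|; first by rewrite A0 min0n.
have [B0|Bp] := posnP #|B|; first by rewrite B0 minn0.
pose F := [set p : T * T | ((p.1 \in A) && (p.2 \in B)) || ((p.1 \in B) && (p.2 \in A))].
apply: (@degen_lb e (A :|: B) F).
- case/card_gt0P: Ap => a aA; apply/set0Pn; exists a; by rewrite inE aA.
- apply/forallP=> x; apply/forallP=> y; apply/implyP.
  rewrite !inE /= => /orP[/andP[xA yB]|/andP[xB yA]].
  + by rewrite hAB // xA yB /= !orbT.
  + by rewrite (sy x) hAB // xB yA /= !orbT.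
- move=> v; rewrite inE => /orP[vA|vB].
  + apply: leq_trans (geq_minr _ _) _; apply: subset_leq_card.
    apply/subsetP => u uB; by rewrite !inE /= vA uB.
  + apply: leq_trans (geq_minl _ _) _; apply: subset_leq_card.
    apply/subsetP => u uA; by rewrite !inE /= vB uA orbT.
Qed.

End Aux.

Lemma subgP (T : finType) (e : rel T) S F x y : subgraphb e S F -> (x, y) \in F ->
  [/\ e x y, x \in S, y \in S & (y, x) \in F].
Proof. by move=> /forallP/(_ x)/forallP/(_ y)/implyP h /h /and4P. Qed.

Lemma degen_proj (T T1 : finType) (e : rel T) (e1 : rel T1) (pi : T -> T1) D :
  symmetric e1 -> (forall x y, e x y -> e1 (pi x) (pi y)) ->
  (forall x w, #|[set y | e x y && (pi y == w)]| <= D) ->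
  degen e <= degen e1 * D.
Proof.
move=> sy1 hpi hD; apply: degen_min; apply/forallP=> S; apply/forallP=> F.
apply/implyP => /andP[Sn sF].
pose S1 := pi @: S.
have S1n : S1 != set0.
  by case/set0Pn: Sn => x xS; apply/set0Pn; exists (pi x); apply: imset_f.
have := degen_ok e1 => /forallP/(_ S1)/forallP/(_ (ind e1 S1))/implyP.
rewrite S1n ind_sub //= => /(_ isT) /exists_inP[v1 /imsetP[x xS ->] hv].
apply/exists_inP; exists x => //.
apply: (leq_trans _ (leq_mul hv (leqnn D))).
rewrite /subdeg -sum1_card.
pose N := [set w | (pi x, w) \in ind e1 S1].
rewrite (partition_big pi (fun w => w \in N)); last first.
  move=> y; rewrite !inE => xyF.
  have [exy _ yS _] := subgP sF xyF.
  by rewrite /= hpi //= !imset_f.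
rewrite -sum_nat_const; apply: leq_sum => w _.
rewrite sum1_card; apply: leq_trans (hD x w); apply: subset_leq_card.
apply/subsetP => y; rewrite inE => /andP[]; rewrite inE => xyF ->; rewrite ?inE ?andbT.
by case: (subgP sF xyF).
Qed.

Lemma dprod_sym (T1 T2 : finType) (e1 : rel T1) (e2 : rel T2) :
  symmetric e1 -> symmetric e2 -> symmetric (dprod_rel e1 e2).
Proof. by move=> s1 s2 x y; rewrite /dprod_rel s1 s2. Qed.

Lemma degen_prod_lb (T1 T2 : finType) (e1 : rel T1) (e2 : rel T2) :
  degen e1 * degen e2 <= degen (dprod_rel e1 e2).
Proof.
have [->|p1] := posnP (degen e1); first by [].
have [->|p2] := posnP (degen e2); first by rewrite muln0.
have [S1 [F1 [S1n sF1 h1]]] := degen_core p1.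
have [S2 [F2 [S2n sF2 h2]]] := degen_core p2.
pose F := [set p : (T1 * T2) * (T1 * T2) |
            ((p.1.1, p.2.1) \in F1) && ((p.1.2, p.2.2) \in F2)].
apply: (@degen_lb _ _ (setX S1 S2) F).
- case/set0Pn: S1n => a aS; case/set0Pn: S2n => b bS.
  by apply/set0Pn; exists (a, b); rewrite inE aS bS.
- apply/forallP=> -[x1 x2]; apply/forallP=> -[y1 y2]; apply/implyP.
  rewrite !inE /= => /andP[f1 f2].
  have [a1 b1 c1 d1] := subgP sF1 f1.
  have [a2 b2 c2 d2] := subgP sF2 f2.
  by rewrite /dprod_rel /= a1 a2 b1 b2 c1 c2 d1 d2.
- move=> [v1 v2]; rewrite inE /= => /andP[v1S v2S].
  rewrite /subdeg.
  have -> : [set u | (v1, v2, u) \in F] =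
            setX [set u | (v1, u) \in F1] [set u | (v2, u) \in F2].
    by apply/setP => -[a b]; rewrite !inE.
  by rewrite cardsX; apply: leq_mul; [apply: h1 | apply: h2].
Qed.

Theorem mainTheorem5 (T1 T2 : finType) (e1 : rel T1) (e2 : rel T2)
  (sym1 : symmetric e1) (irr1 : irreflexive e1)
  (sym2 : symmetric e2) (irr2 : irreflexive e2)
  (s1 t1 s2 t2 : nat)
  (hs1 : 1 <= s1) (hst1 : s1 <= t1) (hs2 : 1 <= s2) (hst2 : s2 <= t2)
  (K1 : contains_Kst e1 s1 t1) (K2 : contains_Kst e2 s2 t2) :
  maxn (maxn (degen e1 * degen e2) (minn (s1 * t2) (s2 * t1)))
       (minn (maxdeg e1) (maxdeg e2))
  <= degen (dprod_rel e1 e2)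
  <= minn (degen e1 * maxdeg e2) (degen e2 * maxdeg e1).
Proof.
have sy := dprod_sym sym1 sym2.
apply/andP; split; last first.
  rewrite leq_min; apply/andP; split.
  - apply: (@degen_proj _ _ _ e1 fst) => //; first by move=> x y /andP[].
    move=> x w; apply: leq_trans (_ : #|setX [set w] [set u | e2 x.2 u]| <= _).
      apply: subset_leq_card; apply/subsetP => -[a b].
      by rewrite !inE /dprod_rel /= => /andP[/andP[_ ->] ->].
    rewrite cardsX cards1 mul1n; change (deg e2 x.2 <= \max_v deg e2 v); exact: leq_bigmax.
  - apply: (@degen_proj _ _ _ e2 snd) => //; first by move=> x y /andP[].
    move=> x w; apply: leq_trans (_ : #|setX [set u | e1 x.1 u] [set w]| <= _).
      apply: subset_leq_card; apply/subsetP => -[a b].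
      by rewrite !inE /dprod_rel /= => /andP[/andP[-> _] ->].
    rewrite cardsX cards1 muln1; change (deg e1 x.1 <= \max_v deg e1 v); exact: leq_bigmax.
rewrite !geq_max degen_prod_lb /=.
case: K1 => A1 [B1 [d1 cA1 cB1 h1]]; case: K2 => A2 [B2 [d2 cA2 cB2 h2]].
apply/andP; split.
  have := @degen_Kbip _ (dprod_rel e1 e2) (setX A1 B2) (setX B1 A2) sy.
  rewrite !cardsX cA1 cB1 cA2 cB2 (mulnC t1 s2); apply.
    rewrite -setI_eq0; apply/eqP/setP => -[a b]; rewrite !inE /=.
    by case aA: (a \in A1); rewrite /= ?(disjointFr d1 aA) ?andbF.
  move=> [a1 b2] [b1 a2]; rewrite !inE /= => /andP[a1A b2B] /andP[b1B a2A].
  by rewrite /dprod_rel /= h1 //= sym2 h2.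
have c1 : 0 < #|T1|.
  by apply: leq_trans hs1 _; rewrite -cA1 max_card.
have c2 : 0 < #|T2|.
  by apply: leq_trans hs2 _; rewrite -cA2 max_card.
have [v1 ev1] := eq_bigmax (fun v => deg e1 v) c1.
have [v2 ev2] := eq_bigmax (fun v => deg e2 v) c2.
have -> : maxdeg e1 = deg e1 v1 by exact: ev1.
have -> : maxdeg e2 = deg e2 v2 by exact: ev2.
rewrite minnC.
have := @degen_Kbip _ (dprod_rel e1 e2) (setX [set v1] [set u | e2 v2 u])
   (setX [set u | e1 v1 u] [set v2]) sy.
rewrite !cardsX !cards1 mul1n muln1; apply.
- rewrite -setI_eq0; apply/eqP/setP => -[a b]; rewrite !inE /=.
  by case: eqP => [->|]; rewrite ?irr1 ?andbF.
- move=> [a b] [c d]; rewrite !inE /= => /andP[/eqP-> eb] /andP[ec /eqP->].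
  by rewrite /dprod_rel /= ec sym2 eb.
Qed.
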